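(* Fix $\alpha,\beta>0$, $\Gamma\ge1$, $R\ge1$, $1\le s\le n_2$, $\gamma>0$ and $c\ge1$. Let $\mathcal{A}:\mathbb{R}^{n_1\times n_2}\to\mathbb{R}^m$ be linear and have the additive rank-$2R$ effectively $(n_1,\max\{s,(\gamma/\beta)^2\})$-sparse RIP$_{(c+1)\Gamma}$ with constant $0<\delta<1$. Let $\hat X=\sum_{r=1}^R\hat u^r(\hat v^r)^T$ have rank $R$, where $\|\hat v^r\|_1\le\sqrt s\,\|\hat v^r\|_2$ for all $r$ and $\sum_{r=1}^R\|\hat u^r\|_2^2\|\hat v^r\|_2^2\le\Gamma^2$ (so $\hat X\in K^{R,\Gamma}_{n_1,s}$), and let $c_{\hat U}>0$ be a constant with $\sum_{r=1}^R(\|\hat u^r\|_2\|\hat v^r\|_2)^{2/3}\le c_{\hat U}R^{2/3}\|\hat X\|_{2/3}^{2/3}$. Let $\eta\in\mathbb{R}^m$, $y=\mathcal{A}(\hat X)+\eta$. Then for any global minimizer $(u^1_{\alpha,\beta},\dots,v^R_{\alpha,\beta})$ of $J^R_{\alpha,\beta}$ satisfying $\|v^r_{\alpha,\beta}\|_2\ge(\|\hat X\|_F+\|\eta\|_2+\sqrt\delta)^2/\gamma$ for all $r\in[R]$ and $\|\sigma_{\alpha,\beta}\|_2\le c\Gamma$, where $(\sigma_{\alpha,\beta})_r=\|u^r_{\alpha,\beta}\|_2\|v^r_{\alpha,\beta}\|_2$, one has $$\|\hat X-X_{\alpha,\beta}\|_F\le\sqrt{s^{1/3}R^{2/3}C_{2,1}c_{\hat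 U}}\;\sqrt[6]{\alpha\beta^2}\;\|\hat X\|_{2/3}^{1/3}+2\|\eta\|_2+\sqrt\delta,$$ where $X_{\alpha,\beta}=\sum_{r=1}^Ru^r_{\alpha,\beta}(v^r_{\alpha,\beta})^T$. Moreover, in this case $X_{\alpha,\beta}\in K^{R,c\Gamma}_{n_1,(\gamma/\beta)^2}$, via the decomposition $X_{\alpha,\beta}=\sum_r(\sigma_{\alpha,\beta})_r\frac{u^r_{\alpha,\beta}}{\|u^r_{\alpha,\beta}\|_2}\big(\frac{v^r_{\alpha,\beta}}{\|v^r_{\alpha,\beta}\|_2}\big)^T$.
   Context: For $y\in\mathbb{R}^m$ and $\alpha,\beta>0$, $J^R_{\alpha,\beta}(u^1,\dots,u^R,v^1,\dots,v^R)=\|y-\mathcal{A}(\sum_{r=1}^Ru^r(v^r)^T)\|_2^2+\alpha\sum_r\|u^r\|_2^2+\beta\sum_r\|v^r\|_1$ on $(\mathbb{R}^{n_1})^R\times(\mathbb{R}^{n_2})^R$. $C_{2,1}=(1/2)^{2/3}+2^{1/3}$. For $0<p<\infty$, $\|Z\|_p$ is the Schatten-$p$ (quasi-)norm, i.e. the $\ell_p$-(quasi-)norm of the vector of singular values of $Z$; $\|\cdot\|_F$ is the Frobenius norm. For $n\ge1$, $s>0$: $K_{n,s}=\{z\in\mathbb{R}^n:\|z\|_2\le1,\ \|z\|_1\le\sqrt s\}$. For $R\ge1,\Gamma\ge1$: $K^{R,\Gamma}_{s_1,s_2}$ is the set of $Z\in\mathbb{R}^{n_1\times n_2}$ of the form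 $Z=\sum_{r=1}^R\sigma_ru^r(v^r)^T$ with $u^r\in K_{n_1,s_1}$, $v^r\in K_{n_2,s_2}$, $\|u^r\|_2=\|v^r\|_2=1$, and $\|\sigma\|_2\le\Gamma$. A linear $\mathcal{A}$ has the additive rank-$R$ effectively $(s_1,s_2)$-sparse RIP$_\Gamma$ with constant $\delta>0$ if $|\|\mathcal{A}(Z)\|_2^2-\|Z\|_F^2|\le\delta$ for all $Z\in K^{R,\Gamma}_{s_1,s_2}$. *)

(* Defs.v *)
From Stdlib Require Import Reals Lra.
Open Scope R_scope.

(* vectors in R^n : nat -> R (only indices < n matter);
   matrices in R^{n1 x n2} : nat -> nat -> R;
   families of R vectors u^1..u^R : nat -> nat -> R  (u r i = i-th entry of u^{r+1}). *)

Fixpoint fsum (n : nat) (f : nat -> R) : R :=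
  match n with O => 0 | S k => fsum k f + f k end.

(* power with the convention 0^p = 0 (p > 0), used for (quasi-)norms *)
Definition rpow (x p : R) : R := if Rle_dec x 0 then 0 else Rpower x p.

Definition norm2 (n : nat) (u : nat -> R) : R := sqrt (fsum n (fun i => u i ^ 2)).
Definition norm1 (n : nat) (u : nat -> R) : R := fsum n (fun i => Rabs (u i)).
Definition frob (n1 n2 : nat) (Z : nat -> nat -> R) : R :=
  sqrt (fsum n1 (fun i => fsum n2 (fun j => Z i j ^ 2))).

Definition outer_sum (Rk : nat) (U V : nat -> nat -> R) : nat -> nat -> R :=
  fun i j => fsum Rk (fun r => U r i * V r j).

Definition Aop (n1 n2 : nat) (a : nat -> nat -> nat -> R) (Z : nat -> nat -> R) : nat -> R :=
  fun k => fsum n1 (fun i => fsum n2 (fun j => a k i j * Z i j)).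

Definition mat_eq (n1 n2 : nat) (Z W : nat -> nat -> R) : Prop :=
  forall i j, (i < n1)%nat -> (j < n2)%nat -> Z i j = W i j.

Definition rank_le (n1 n2 : nat) (Z : nat -> nat -> R) (r : nat) : Prop :=
  exists U V : nat -> nat -> R, mat_eq n1 n2 Z (outer_sum r U V).
Definition has_rank (n1 n2 : nat) (Z : nat -> nat -> R) (r : nat) : Prop :=
  rank_le n1 n2 Z r /\ forall r', (r' < r)%nat -> ~ rank_le n1 n2 Z r'.

Definition orthonormal (n k : nat) (P : nat -> nat -> R) : Prop :=
  forall a b, (a < k)%nat -> (b < k)%nat ->
    fsum n (fun i => P a i * P b i) = if Nat.eq_dec a b then 1 else 0.

(* N is the Schatten-p (quasi-)norm of Z: for a singular value decomposition
   Z = sum_i sigma_i p_i q_i^T (sigma_i >= 0, orthonormal p's and q's),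
   N = (sum_i sigma_i^p)^(1/p).  (Nonzero singular values are unique.) *)
Definition is_schatten (n1 n2 : nat) (Z : nat -> nat -> R) (p N : R) : Prop :=
  exists (k : nat) (sigma : nat -> R) (P Q : nat -> nat -> R),
    (forall i, (i < k)%nat -> 0 <= sigma i) /\
    orthonormal n1 k P /\ orthonormal n2 k Q /\
    mat_eq n1 n2 Z (fun i j => fsum k (fun l => sigma l * P l i * Q l j)) /\
    N = rpow (fsum k (fun l => rpow (sigma l) p)) (1 / p).

Definition inK (n : nat) (s : R) (z : nat -> R) : Prop :=
  norm2 n z <= 1 /\ norm1 n z <= sqrt s.

Definition inKR (n1 n2 Rk : nat) (Gamma s1 s2 : R) (Z : nat -> nat -> R) : Prop :=
  exists (sigma : nat -> R) (U V : nat -> nat -> R),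
    (forall r, (r < Rk)%nat ->
       inK n1 s1 (U r) /\ inK n2 s2 (V r) /\ norm2 n1 (U r) = 1 /\ norm2 n2 (V r) = 1) /\
    sqrt (fsum Rk (fun r => sigma r ^ 2)) <= Gamma /\
    mat_eq n1 n2 Z (fun i j => fsum Rk (fun r => sigma r * U r i * V r j)).

Definition RIP (m n1 n2 : nat) (a : nat -> nat -> nat -> R)
    (Rk : nat) (s1 s2 Gamma delta : R) : Prop :=
  forall Z, inKR n1 n2 Rk Gamma s1 s2 Z ->
    Rabs (norm2 m (Aop n1 n2 a Z) ^ 2 - frob n1 n2 Z ^ 2) <= delta.

Definition J (m n1 n2 Rk : nat) (a : nat -> nat -> nat -> R) (y : nat -> R)
    (alpha beta : R) (U V : nat -> nat -> R) : R :=
  norm2 m (fun k => y k - Aop n1 n2 a (outer_sum Rk U V) k) ^ 2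
  + alpha * fsum Rk (fun r => norm2 n1 (U r) ^ 2)
  + beta * fsum Rk (fun r => norm1 n2 (V r)).

Definition C21 : R := Rpower (1/2) (2/3) + Rpower 2 (1/3).

(* Main.v *)
Require Import Defs.
From Stdlib Require Import Reals.
From Stdlib Require Import Lra Lia FunctionalExtensionality.
Open Scope R_scope.

Lemma fsum_ext n f g : (forall i, (i < n)%nat -> f i = g i) -> fsum n f = fsum n g.
Proof. induction n; simpl; intros H; auto. rewrite IHn, H; auto. Qed.

Lemma fsum_plus n f g : fsum n (fun i => f i + g i) = fsum n f + fsum n g.
Proof. induction n; simpl; [ring| rewrite IHn; ring]. Qed.

Lemma fsum_scal n c f : fsum n (fun i => c * f i) = c * fsum n f.
Proof. induction n; simpl; [ring| rewrite IHn; ring]. Qed.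

Lemma fsum_0 n : fsum n (fun _ => 0) = 0.
Proof. induction n; simpl; [ring| rewrite IHn; ring]. Qed.

Lemma fsum_1 n : fsum n (fun _ => 1) = INR n.
Proof. induction n; simpl fsum; [simpl; ring| rewrite IHn, S_INR; ring]. Qed.

Lemma fsum_nonneg n f : (forall i, (i < n)%nat -> 0 <= f i) -> 0 <= fsum n f.
Proof. induction n; simpl; intros H; [lra|]. assert (0 <= f n) by auto. assert (0 <= fsum n f) by auto. lra. Qed.

Lemma fsum_le n f g : (forall i, (i < n)%nat -> f i <= g i) -> fsum n f <= fsum n g.
Proof. induction n; simpl; intros H; [lra|]. assert (f n <= g n) by auto. assert (fsum n f <= fsum n g) by auto. lra. Qed.

Lemma fsum_term_le n f k : (forall i, (i < n)%nat -> 0 <= f i) -> (k < n)%nat -> f k <= fsum n f.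
Proof.
  induction n; simpl; intros H Hk; [lia|].
  destruct (Nat.eq_dec k n).
  - subst. assert (0 <= fsum n f) by (apply fsum_nonneg; auto). lra.
  - assert (f k <= fsum n f) by (apply IHn; auto; lia). assert (0 <= f n) by auto. lra.
Qed.

Lemma fsum_add_range n m f : fsum (n + m) f = fsum n f + fsum m (fun i => f (n + i)%nat).
Proof.
  induction m; simpl.
  - rewrite Nat.add_0_r. ring.
  - rewrite Nat.add_succ_r. simpl. rewrite IHm. ring.
Qed.

Lemma fsum_zero_each n f k : (forall i, (i < n)%nat -> 0 <= f i) -> fsum n f = 0 -> (k < n)%nat -> f k = 0.
Proof. intros H E Hk. pose proof (fsum_term_le n f k H Hk). pose proof (H k Hk). lra. Qed.

Lemma fsum_e0 n f : (1 <= n)%nat -> f 0%nat = 1 -> (forall i, i <> 0%nat -> f i = 0) -> fsum n f = 1.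
Proof.
  induction n; intros Hn H0 H; [lia|]. simpl.
  destruct n. simpl. rewrite H0. ring.
  rewrite IHn; auto; [|lia]. rewrite H; [ring|lia].
Qed.

Lemma CS n x y : (fsum n (fun i => x i * y i))^2 <= fsum n (fun i => x i ^ 2) * fsum n (fun i => y i ^ 2).
Proof.
  set (A := fsum n (fun i => x i ^ 2)). set (B := fsum n (fun i => x i * y i)).
  set (C := fsum n (fun i => y i ^ 2)).
  assert (Hq : forall t, 0 <= A + 2 * t * B + t ^ 2 * C).
  { intros t. assert (E : fsum n (fun i => (x i + t * y i) ^ 2) = A + 2 * t * B + t ^ 2 * C).
    { unfold A, B, C. rewrite <- !fsum_scal, <- !fsum_plus. apply fsum_ext; intros; ring. }
    rewrite <- E. apply fsum_nonneg. intros; apply pow2_ge_0. }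
  assert (HC : 0 <= C) by (apply fsum_nonneg; intros; apply pow2_ge_0).
  destruct (Req_dec C 0) as [HC0|HC0].
  - assert (B = 0).
    { unfold B. rewrite <- (fsum_0 n). apply fsum_ext. intros i Hi.
      assert (y i ^ 2 = 0) by (apply (fsum_zero_each n (fun i => y i ^2)); auto; intros; apply pow2_ge_0).
      assert (y i = 0) by (match goal with H : y i ^ 2 = 0 |- _ => simpl in H; nra end). match goal with H : y i = 0 |- _ => rewrite H; ring end. }
    rewrite H, HC0. nra.
  - assert (0 < C) by lra. specialize (Hq (- B / C)).
    assert (E: A + 2 * (- B / C) * B + (- B / C) ^ 2 * C = A - B^2 / C) by (field; auto).
    rewrite E in Hq. assert (0 <= A * C - B^2).
    { replace (A * C - B^2) with ((A - B^2/C) * C) by (field; auto). nra. }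
    lra.
Qed.

Lemma norm2_nonneg n u : 0 <= norm2 n u.
Proof. apply sqrt_pos. Qed.

Lemma norm2_sq n u : norm2 n u ^ 2 = fsum n (fun i => u i ^ 2).
Proof. unfold norm2. rewrite pow2_sqrt; auto. apply fsum_nonneg; intros; nra. Qed.

Lemma norm1_nonneg n u : 0 <= norm1 n u.
Proof. apply fsum_nonneg; intros; apply Rabs_pos. Qed.

Lemma dot_le n x y : fsum n (fun i => x i * y i) <= norm2 n x * norm2 n y.
Proof.
  pose proof (CS n x y). rewrite <- !norm2_sq in H.
  pose proof (norm2_nonneg n x). pose proof (norm2_nonneg n y).
  set (B := fsum n (fun i => x i * y i)) in *.
  assert (B^2 <= (norm2 n x * norm2 n y)^2) by nra.
  assert (0 <= norm2 n x * norm2 n y) by nra. set (P := norm2 n x * norm2 n y) in *. destruct (Rle_dec B P); auto. nra.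
Qed.

Lemma norm2_sum_sq n x y : norm2 n (fun i => x i + y i) ^ 2
  = norm2 n x ^ 2 + 2 * fsum n (fun i => x i * y i) + norm2 n y ^ 2.
Proof. rewrite !norm2_sq, <- fsum_scal, <- !fsum_plus. apply fsum_ext; intros; ring. Qed.

Lemma norm2_tri n x y : norm2 n (fun i => x i + y i) <= norm2 n x + norm2 n y.
Proof.
  pose proof (norm2_sum_sq n x y). pose proof (dot_le n x y).
  pose proof (norm2_nonneg n x). pose proof (norm2_nonneg n y).
  pose proof (norm2_nonneg n (fun i => x i + y i)). nra.
Qed.

Lemma norm2_rev n x y : norm2 n x ^ 2 - 2 * norm2 n x * norm2 n y <= norm2 n (fun i => x i + y i) ^ 2 - norm2 n y ^ 2.
Proof.
  rewrite norm2_sum_sq. pose proof (dot_le n (fun i => - x i) y).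
  assert (E: fsum n (fun i => - x i * y i) = - fsum n (fun i => x i * y i)).
  { rewrite (fsum_ext n _ (fun i => -1 * (x i * y i))) by (intros; ring). rewrite fsum_scal; ring. }
  assert (E2: norm2 n (fun i => - x i) = norm2 n x).
  { unfold norm2. f_equal. apply fsum_ext; intros; ring. }
  cbv beta in H; rewrite E, E2 in H. nra.
Qed.

Lemma norm1_le_sqrt n u : norm1 n u <= sqrt (INR n) * norm2 n u.
Proof.
  pose proof (CS n (fun i => Rabs (u i)) (fun _ => 1)).
  assert (E1: fsum n (fun i => Rabs (u i) * 1) = norm1 n u) by (apply fsum_ext; intros; ring).
  assert (E2: fsum n (fun i => Rabs (u i) ^ 2) = norm2 n u ^ 2) by (rewrite norm2_sq; apply fsum_ext; intros; apply pow2_abs).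
  assert (E3: fsum n (fun _ : nat => 1 ^ 2) = INR n) by (rewrite <- fsum_1; apply fsum_ext; intros; ring).
  cbv beta in H; rewrite E1, E2, E3 in H.
  pose proof (norm1_nonneg n u). pose proof (norm2_nonneg n u).
  pose proof (sqrt_pos (INR n)). pose proof (pos_INR n).
  assert (sqrt (INR n) ^ 2 = INR n) by (apply pow2_sqrt; auto).
  assert (E4: (sqrt (INR n) * norm2 n u)^2 = INR n * norm2 n u ^ 2) by (rewrite Rpow_mult_distr; congruence).
  assert (norm1 n u ^ 2 <= (sqrt (INR n) * norm2 n u)^2) by lra.
  assert (0 <= sqrt (INR n) * norm2 n u) by nra.
  set (P := sqrt (INR n) * norm2 n u) in *. destruct (Rle_dec (norm1 n u) P); auto. nra.
Qed.

Definition e0 : nat -> R := fun i => if Nat.eq_dec i 0 then 1 else 0.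
Definition nz (n : nat) (u : nat -> R) : nat -> R :=
  if Req_EM_T (norm2 n u) 0 then e0 else fun i => u i / norm2 n u.

Lemma norm2_scale n c u : norm2 n (fun i => c * u i) = Rabs c * norm2 n u.
Proof.
  unfold norm2. rewrite (fsum_ext n _ (fun i => c^2 * u i ^ 2)) by (intros; ring).
  rewrite fsum_scal, sqrt_mult; [| apply pow2_ge_0 | apply fsum_nonneg; intros; apply pow2_ge_0].
  f_equal. rewrite <- sqrt_Rsqr_abs. unfold Rsqr. f_equal. ring.
Qed.

Lemma norm1_scale n c u : norm1 n (fun i => c * u i) = Rabs c * norm1 n u.
Proof. unfold norm1. rewrite <- fsum_scal. apply fsum_ext; intros; apply Rabs_mult. Qed.

Lemma norm2_div n u d : 0 < d -> norm2 n (fun i => u i / d) = norm2 n u / d.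
Proof.
  intros Hd. rewrite (functional_extensionality (fun i => u i / d) (fun i => / d * u i)) by (intros; unfold Rdiv; ring).
  rewrite norm2_scale, Rabs_right; [unfold Rdiv; ring|]. left; apply Rinv_0_lt_compat; auto.
Qed.

Lemma norm1_div n u d : 0 < d -> norm1 n (fun i => u i / d) = norm1 n u / d.
Proof.
  intros Hd. rewrite (functional_extensionality (fun i => u i / d) (fun i => / d * u i)) by (intros; unfold Rdiv; ring).
  rewrite norm1_scale, Rabs_right; [unfold Rdiv; ring|]. left; apply Rinv_0_lt_compat; auto.
Qed.

Lemma norm2_zero n u i : norm2 n u = 0 -> (i < n)%nat -> u i = 0.
Proof.
  intros H Hi. assert (E: fsum n (fun i => u i ^ 2) = 0) by (rewrite <- norm2_sq, H; ring).
  assert (u i ^ 2 = 0) by (apply (fsum_zero_each n (fun i => u i ^ 2)); auto; intros; apply pow2_ge_0).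
  simpl in H0. nra.
Qed.

Lemma norm1_zero n u i : norm1 n u = 0 -> (i < n)%nat -> u i = 0.
Proof.
  intros H Hi. assert (Rabs (u i) = 0) by (apply (fsum_zero_each n (fun i => Rabs (u i))); auto; intros; apply Rabs_pos).
  destruct (Rcase_abs (u i)); [rewrite Rabs_left in H0 by auto|rewrite Rabs_right in H0 by auto]; lra.
Qed.

Lemma e0_norm2 n : (1 <= n)%nat -> norm2 n e0 = 1.
Proof.
  intros Hn. unfold norm2. rewrite fsum_e0; auto using sqrt_1.
  unfold e0; simpl; ring. intros i Hi; unfold e0; destruct (Nat.eq_dec i 0); [lia|ring].
Qed.

Lemma e0_norm1 n : (1 <= n)%nat -> norm1 n e0 = 1.
Proof.
  intros Hn. unfold norm1. rewrite fsum_e0; auto.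
  unfold e0; simpl; apply Rabs_R1. intros i Hi; unfold e0; destruct (Nat.eq_dec i 0); [lia|apply Rabs_R0].
Qed.

Lemma nz_prop n u : (1 <= n)%nat -> norm2 n (nz n u) = 1 /\ (forall i, (i < n)%nat -> u i = norm2 n u * nz n u i).
Proof.
  intros Hn. unfold nz. destruct (Req_EM_T (norm2 n u) 0) as [H|H].
  - split. apply e0_norm2; auto. intros i Hi. rewrite H, (norm2_zero n u i H Hi). ring.
  - pose proof (norm2_nonneg n u). split.
    + rewrite norm2_div by lra. field; auto.
    + intros; field; auto.
Qed.

Lemma nz_inK n s u : (1 <= n)%nat -> norm1 n u <= sqrt s * norm2 n u ->
  (norm2 n u = 0 -> 1 <= sqrt s) -> inK n s (nz n u).
Proof.
  intros Hn H1 H2. split. { rewrite (proj1 (nz_prop n u Hn)). lra. }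
  unfold nz. destruct (Req_EM_T (norm2 n u) 0) as [H|H].
  - rewrite e0_norm1; auto.
  - pose proof (norm2_nonneg n u). rewrite norm1_div by lra.
    apply Rmult_le_reg_r with (norm2 n u); [lra|]. unfold Rdiv. rewrite Rmult_assoc, Rinv_l; lra.
Qed.

Lemma Aop_sub n1 n2 a Z W k : Aop n1 n2 a (fun i j => Z i j - W i j) k = Aop n1 n2 a Z k - Aop n1 n2 a W k.
Proof.
  unfold Aop. replace (fsum n1 (fun i => fsum n2 (fun j => a k i j * Z i j)) - fsum n1 (fun i => fsum n2 (fun j => a k i j * W i j)))
   with (fsum n1 (fun i => fsum n2 (fun j => a k i j * Z i j)) + -1 * fsum n1 (fun i => fsum n2 (fun j => a k i j * W i j))) by ring.
  rewrite <- fsum_scal, <- fsum_plus. apply fsum_ext. intros.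
  rewrite <- fsum_scal, <- fsum_plus. apply fsum_ext. intros. ring.
Qed.

Lemma Aop_ext n1 n2 a Z W : mat_eq n1 n2 Z W -> Aop n1 n2 a Z = Aop n1 n2 a W.
Proof.
  intros H. apply functional_extensionality. intros k. unfold Aop.
  apply fsum_ext; intros. apply fsum_ext; intros. rewrite H; auto.
Qed.

Definition good n1 n2 s1 s2 (u v : nat -> R) :=
  inK n1 s1 u /\ inK n2 s2 v /\ norm2 n1 u = 1 /\ norm2 n2 v = 1.

Lemma inKR_concat n1 n2 Rk G s1 s2 sa Ua Va sb Ub Vb Z :
  (forall r, (r < Rk)%nat -> good n1 n2 s1 s2 (Ua r) (Va r)) ->
  (forall r, (r < Rk)%nat -> good n1 n2 s1 s2 (Ub r) (Vb r)) ->
  fsum Rk (fun r => sa r ^ 2) + fsum Rk (fun r => sb r ^ 2) <= G ^ 2 -> 0 <= G ->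
  mat_eq n1 n2 Z (fun i j => fsum Rk (fun r => sa r * Ua r i * Va r j) + fsum Rk (fun r => sb r * Ub r i * Vb r j)) ->
  inKR n1 n2 (2 * Rk) G s1 s2 Z.
Proof.
  intros Ha Hb Hs HG HZ.
  exists (fun r => if Compare_dec.lt_dec r Rk then sa r else sb (r - Rk)%nat),
         (fun r => if Compare_dec.lt_dec r Rk then Ua r else Ub (r - Rk)%nat),
         (fun r => if Compare_dec.lt_dec r Rk then Va r else Vb (r - Rk)%nat).
  replace (2 * Rk)%nat with (Rk + Rk)%nat by lia.
  split; [|split].
  - intros r Hr. destruct (Compare_dec.lt_dec r Rk). apply Ha; auto. apply Hb; lia.
  - rewrite fsum_add_range.
    rewrite (fsum_ext Rk _ (fun r => sa r ^ 2)) by (intros i Hi; destruct (Compare_dec.lt_dec i Rk); [auto|lia]).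
    rewrite (fsum_ext Rk (fun i => (if Compare_dec.lt_dec (Rk+i) Rk then sa (Rk+i)%nat else sb (Rk+i-Rk)%nat) ^ 2) (fun r => sb r ^ 2)) by (intros i Hi; destruct (Compare_dec.lt_dec (Rk + i) Rk); [lia|]; replace (Rk + i - Rk)%nat with i by lia; reflexivity).
    rewrite <- (sqrt_pow2 G HG). apply sqrt_le_1_alt. auto.
  - intros i j Hi Hj. rewrite HZ by auto. rewrite fsum_add_range. f_equal.
    + apply fsum_ext; intros r Hr. destruct (Compare_dec.lt_dec r Rk); [auto|lia].
    + apply fsum_ext; intros r Hr. destruct (Compare_dec.lt_dec (Rk + r) Rk); [lia|].
      replace (Rk + r - Rk)%nat with r by lia. auto.
Qed.

Definition topt (al be a b : R) : R := exp ((ln (be * b) - ln 2 - ln (al * a ^ 2)) / 3).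

Lemma ln_le' x y : 0 < x -> x <= y -> ln x <= ln y.
Proof. intros. destruct H0. left; apply ln_increasing; auto. subst; lra. Qed.
Lemma exp_le' x y : x <= y -> exp x <= exp y.
Proof. intros [H|H]. left; apply exp_increasing; auto. subst; lra. Qed.

Lemma topt_pos al be a b : 0 < topt al be a b.
Proof. apply exp_pos. Qed.

Lemma per_term al be s a b w : 0 < al -> 0 < be -> 1 <= s -> 0 < a -> 0 < b -> b <= sqrt s * w ->
  al * (topt al be a b ^ 2 * a ^ 2) + be * (b / topt al be a b)
  <= C21 * Rpower (al * be ^ 2) (1/3) * Rpower s (1/3) * Rpower (a * w) (2/3).
Proof.
  intros Hal Hbe Hs Ha Hb Hbw.
  assert (Hss : 0 < sqrt s) by (apply sqrt_lt_R0; lra).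
  assert (Hw : 0 < w).
  { destruct (Rle_dec w 0); [|lra]. assert (sqrt s * w <= 0) by nra. lra. }
  set (la := ln a). set (lb := ln b). set (lw := ln w). set (ls := ln s).
  set (lal := ln al). set (lbe := ln be). set (l2 := ln 2).
  assert (Hlb : lb <= ls / 2 + lw).
  { unfold lb. assert (ln b <= ln (sqrt s * w)) by (apply ln_le'; auto).
    rewrite ln_mult in H by auto.
    assert (ln s = 2 * ln (sqrt s)).
    { rewrite <- (sqrt_sqrt s) at 1 by lra. rewrite ln_mult by auto. ring. }
    unfold ls, lw. lra. }
  set (lt := (lbe + lb - l2 - (lal + 2 * la)) / 3).
  assert (Et : topt al be a b = exp lt).
  { unfold topt, lt. f_equal. rewrite !ln_mult; try nra. simpl. rewrite Rmult_1_r, ln_mult by auto.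
    unfold lbe, lb, l2, lal, la. field. }
  rewrite Et.
  assert (E1 : al * (exp lt ^ 2 * a ^ 2) = exp ((lal + 2*la + 2*lbe + 2*lb)/3 - 2*l2/3)).
  { replace ((lal + 2*la + 2*lbe + 2*lb)/3 - 2*l2/3) with (lal + (lt + lt) + (la + la)) by (unfold lt; field).
    rewrite !exp_plus. unfold lal, la. rewrite !exp_ln by auto. ring. }
  assert (E2 : be * (b / exp lt) = exp ((lal + 2*la + 2*lbe + 2*lb)/3 + l2/3)).
  { replace ((lal + 2*la + 2*lbe + 2*lb)/3 + l2/3) with (lbe + lb + - lt) by (unfold lt; field).
    rewrite !exp_plus, exp_Ropp. unfold lbe, lb. rewrite !exp_ln by auto. field. apply Rgt_not_eq, exp_pos. }
  rewrite E1, E2.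
  assert (EC : C21 = exp (- (2*l2/3)) + exp (l2/3)).
  { unfold C21, Rpower, l2. replace (1/2) with (/2) by field. rewrite ln_Rinv by lra. f_equal; f_equal; field. }
  assert (ER : Rpower (al * be ^ 2) (1/3) * Rpower s (1/3) * Rpower (a * w) (2/3)
     = exp ((lal + 2*lbe)/3 + ls/3 + 2*(la+lw)/3)).
  { unfold Rpower. rewrite !exp_plus. f_equal; [f_equal|]; f_equal.
    - simpl. rewrite Rmult_1_r, !ln_mult; try nra. unfold lal, lbe. field.
    - unfold ls; field.
    - rewrite ln_mult by auto. unfold la, lw; field. }
  rewrite Rmult_assoc, Rmult_assoc, <- (Rmult_assoc (Rpower _ _)), ER, EC.
  set (E0 := (lal + 2*la + 2*lbe + 2*lb)/3).
  replace (E0 - 2*l2/3) with (E0 + - (2*l2/3)) by ring.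
  rewrite (exp_plus E0 (-(2*l2/3))), (exp_plus E0 (l2/3)). rewrite <- Rmult_plus_distr_l, Rmult_comm.
  apply Rmult_le_compat_l. { pose proof (exp_pos (-(2*l2/3))). pose proof (exp_pos (l2/3)). lra. }
  apply exp_le'. unfold E0. lra.
Qed.

Lemma nz_outer n1 n2 u v i j : (1 <= n1)%nat -> (1 <= n2)%nat -> (i < n1)%nat -> (j < n2)%nat ->
  norm2 n1 u * norm2 n2 v * nz n1 u i * nz n2 v j = u i * v j.
Proof.
  intros H1 H2 Hi Hj. rewrite (proj2 (nz_prop n1 u H1) i Hi), (proj2 (nz_prop n2 v H2) j Hj). ring.
Qed.

Lemma inK_U n1 u : (1 <= n1)%nat -> inK n1 (INR n1) (nz n1 u) /\ norm2 n1 (nz n1 u) = 1.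
Proof.
  intros H. split; [|apply nz_prop; auto]. apply nz_inK; auto. apply norm1_le_sqrt.
  intros _. rewrite <- sqrt_1. apply sqrt_le_1_alt. apply (le_INR 1); auto.
Qed.

Lemma inK_V n2 s s2 v : (1 <= n2)%nat -> 1 <= s2 -> s <= s2 -> norm1 n2 v <= sqrt s * norm2 n2 v ->
  inK n2 s2 (nz n2 v) /\ norm2 n2 (nz n2 v) = 1.
Proof.
  intros H Hs2 Hss Hv. split; [|apply nz_prop; auto]. apply nz_inK; auto.
  - pose proof (sqrt_le_1_alt _ _ Hss). pose proof (norm2_nonneg n2 v). nra.
  - intros _. rewrite <- sqrt_1. apply sqrt_le_1_alt. auto.
Qed.

Lemma rpow_nonneg x p : 0 <= rpow x p.
Proof. unfold rpow. destruct (Rle_dec x 0); [lra|]. left; apply exp_pos. Qed.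

Lemma rpow_pos_eq x p : 0 < x -> rpow x p = Rpower x p.
Proof. unfold rpow. destruct (Rle_dec x 0); [lra|auto]. Qed.

Lemma rpow_sq x p : rpow x p ^ 2 = rpow x (2 * p).
Proof.
  unfold rpow. destruct (Rle_dec x 0); [simpl; ring|].
  simpl. rewrite Rmult_1_r, <- Rpower_plus. f_equal. ring.
Qed.

Lemma C21_pos : 0 < C21.
Proof. unfold C21, Rpower. pose proof (exp_pos (2/3 * ln (1/2))). pose proof (exp_pos (1/3 * ln 2)). lra. Qed.

Theorem mainTheorem6
  (m n1 n2 Rk : nat) (alpha beta Gamma s gamma c delta : R)
  (a : nat -> nat -> nat -> R)
  (hU hV : nat -> nat -> R) (cU Nhat : R) (eta : nat -> R)
  (U V : nat -> nat -> R) :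
  0 < alpha -> 0 < beta -> 1 <= Gamma -> (1 <= Rk)%nat ->
  1 <= s -> s <= INR n2 -> 0 < gamma -> 1 <= c ->
  0 < delta -> delta < 1 ->
  RIP m n1 n2 a (2 * Rk) (INR n1) (Rmax s ((gamma / beta) ^ 2)) ((c + 1) * Gamma) delta ->
  has_rank n1 n2 (outer_sum Rk hU hV) Rk ->
  (forall r, (r < Rk)%nat -> norm1 n2 (hV r) <= sqrt s * norm2 n2 (hV r)) ->
  fsum Rk (fun r => norm2 n1 (hU r) ^ 2 * norm2 n2 (hV r) ^ 2) <= Gamma ^ 2 ->
  is_schatten n1 n2 (outer_sum Rk hU hV) (2/3) Nhat ->
  0 < cU ->
  fsum Rk (fun r => rpow (norm2 n1 (hU r) * norm2 n2 (hV r)) (2/3))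
    <= cU * rpow (INR Rk) (2/3) * rpow Nhat (2/3) ->
  let Xhat := outer_sum Rk hU hV in
  let y := fun k => Aop n1 n2 a Xhat k + eta k in
  (forall U' V' : nat -> nat -> R,
     J m n1 n2 Rk a y alpha beta U V <= J m n1 n2 Rk a y alpha beta U' V') ->
  (forall r, (r < Rk)%nat ->
     norm2 n2 (V r) >= (frob n1 n2 Xhat + norm2 m eta + sqrt delta) ^ 2 / gamma) ->
  sqrt (fsum Rk (fun r => (norm2 n1 (U r) * norm2 n2 (V r)) ^ 2)) <= c * Gamma ->
  let X := outer_sum Rk U V in
  frob n1 n2 (fun i j => Xhat i j - X i j)
    <= sqrt (rpow s (1/3) * rpow (INR Rk) (2/3) * C21 * cU)
       * rpow (alpha * beta ^ 2) (1/6) * rpow Nhat (1/3)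
       + 2 * norm2 m eta + sqrt delta
  /\ inKR n1 n2 Rk (c * Gamma) (INR n1) ((gamma / beta) ^ 2) X
  /\ (forall r, (r < Rk)%nat ->
        inK n2 ((gamma / beta) ^ 2) (fun j => V r j / norm2 n2 (V r))).
Proof.
  intros Hal Hbe HG HR Hs1 Hs2 Hga Hc Hd0 Hd1 HRIP Hrank HhV HGam Hsch HcU HcUb Xhat y Hmin Hvlow Hsig X.
  assert (Hn2 : (1 <= n2)%nat).
  { destruct n2; [simpl in Hs2; lra| lia]. }
  assert (Hn1 : (1 <= n1)%nat).
  { destruct n1; [|lia]. exfalso. apply (proj2 Hrank 0%nat); [lia|].
    exists (fun _ _ => 0), (fun _ _ => 0). intros i j Hi. lia. }
  set (S2 := Rmax s ((gamma / beta) ^ 2)).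
  assert (HS2 : 1 <= S2) by (unfold S2; pose proof (Rmax_l s ((gamma/beta)^2)); lra).
  set (sa := fun r => norm2 n1 (hU r) * norm2 n2 (hV r)).
  set (Ua := fun r => nz n1 (hU r)). set (Va := fun r => nz n2 (hV r)).
  assert (Hgood_a : forall r, (r < Rk)%nat -> good n1 n2 (INR n1) S2 (Ua r) (Va r)).
  { intros r Hr. destruct (inK_U n1 (hU r) Hn1). destruct (inK_V n2 s S2 (hV r)); auto.
    unfold S2; apply Rmax_l. unfold good, Ua, Va; auto. }
  assert (Hcg : 0 <= (c + 1) * Gamma) by nra.
  assert (Hsa : fsum Rk (fun r => sa r ^ 2) <= Gamma ^ 2).
  { rewrite (fsum_ext Rk _ (fun r => norm2 n1 (hU r) ^ 2 * norm2 n2 (hV r) ^ 2)); auto.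
    intros; unfold sa; ring. }
  assert (Hsa0 : 0 <= fsum Rk (fun r => sa r ^ 2)) by (apply fsum_nonneg; intros; apply pow2_ge_0).
  assert (HA : Rabs (norm2 m (Aop n1 n2 a Xhat) ^ 2 - frob n1 n2 Xhat ^ 2) <= delta).
  { apply HRIP. apply (inKR_concat _ _ _ _ _ _ sa Ua Va (fun _ => 0) Ua Va); auto.
    - cbv beta. rewrite (fsum_ext Rk (fun _ => 0 ^ 2) (fun _ => 0)) by (intros; ring). rewrite fsum_0. nra.
    - intros i j Hi Hj. unfold Xhat, outer_sum. cbv beta. rewrite (fsum_ext Rk (fun r => 0 * Ua r i * Va r j) (fun _ => 0)) by (intros; ring).
      rewrite fsum_0, Rplus_0_r. apply fsum_ext. intros r Hr. unfold sa, Ua, Va. rewrite nz_outer; auto. }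
  set (F := frob n1 n2 Xhat). set (E := norm2 m eta). set (sd := sqrt delta).
  assert (HF : 0 <= F) by apply sqrt_pos. assert (HE : 0 <= E) by apply norm2_nonneg.
  assert (Hsd : 0 < sd) by (apply sqrt_lt_R0; lra).
  assert (Hsd2 : sd ^ 2 = delta) by (apply pow2_sqrt; lra).
  assert (HAX : norm2 m (Aop n1 n2 a Xhat) <= F + sd).
  { pose proof (Rle_abs (norm2 m (Aop n1 n2 a Xhat) ^ 2 - frob n1 n2 Xhat ^ 2)).
    pose proof (norm2_nonneg m (Aop n1 n2 a Xhat)). fold F in H.
    set (q := norm2 m (Aop n1 n2 a Xhat)) in *.
    assert (0 <= F * sd) by nra. assert (q ^ 2 <= (F + sd) ^ 2). { fold F in HA. rewrite <- Hsd2 in HA. nra. }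
    destruct (Rle_dec q (F + sd)); auto. nra. }
  assert (Hy : norm2 m y <= F + sd + E).
  { pose proof (norm2_tri m (Aop n1 n2 a Xhat) eta). fold E in H. unfold y. lra. }
  assert (J0 : J m n1 n2 Rk a y alpha beta (fun _ _ => 0) (fun _ _ => 0) = norm2 m y ^ 2).
  { unfold J. 
    assert (Ez : (fun k => y k - Aop n1 n2 a (outer_sum Rk (fun _ _ => 0) (fun _ _ => 0)) k) = y).
    { apply functional_extensionality; intros k. unfold Aop, outer_sum.
      rewrite (fsum_ext n1 _ (fun _ => 0)). rewrite fsum_0; ring.
      intros. rewrite (fsum_ext n2 _ (fun _ => 0)). apply fsum_0.
      intros. rewrite (fsum_ext Rk _ (fun _ => 0)) by (intros; ring). rewrite fsum_0; ring. }
    rewrite Ez. rewrite (fsum_ext Rk _ (fun _ => 0)), (fsum_ext Rk (fun r => norm1 n2 _) (fun _ => 0)), fsum_0. ring.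
    - intros. unfold norm1. rewrite (fsum_ext n2 _ (fun _ => 0)) by (intros; apply Rabs_R0). apply fsum_0.
    - intros. unfold norm2. rewrite (fsum_ext n1 _ (fun _ => 0)) by (intros; ring). rewrite fsum_0, sqrt_0. ring. }
  assert (HJl : forall U' V', norm2 m (fun k => y k - Aop n1 n2 a (outer_sum Rk U' V') k) ^ 2
                              + beta * fsum Rk (fun r => norm1 n2 (V' r)) <= J m n1 n2 Rk a y alpha beta U' V'
       /\ norm2 m (fun k => y k - Aop n1 n2 a (outer_sum Rk U' V') k) ^ 2 <= J m n1 n2 Rk a y alpha beta U' V').
  { intros U' V'. unfold J.
    assert (0 <= fsum Rk (fun r => norm2 n1 (U' r) ^ 2)) by (apply fsum_nonneg; intros; apply pow2_ge_0).
    assert (0 <= fsum Rk (fun r => norm1 n2 (V' r))) by (apply fsum_nonneg; intros; apply norm1_nonneg).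
    split; nra. }
  set (M := (F + E + sd) ^ 2).
  assert (HM : 0 < M) by (unfold M; nra).
  assert (Hv1 : forall r, (r < Rk)%nat -> norm1 n2 (V r) <= M / beta).
  { intros r Hr. pose proof (proj1 (HJl U V)). pose proof (Hmin (fun _ _ => 0) (fun _ _ => 0)).
    rewrite J0 in H0.
    assert (norm1 n2 (V r) <= fsum Rk (fun r => norm1 n2 (V r))) by (apply (fsum_term_le Rk (fun r => norm1 n2 (V r))); auto; intros; apply norm1_nonneg).
    assert (norm2 m y ^ 2 <= M).
    { unfold M. pose proof (norm2_nonneg m y). assert (0 <= norm2 m y <= F + E + sd) by lra. nra. }
    pose proof (pow2_ge_0 (norm2 m (fun k => y k - Aop n1 n2 a (outer_sum Rk U V) k))).
    assert (beta * norm1 n2 (V r) <= beta * fsum Rk (fun r => norm1 n2 (V r))) by (apply Rmult_le_compat_l; lra). apply Rmult_le_reg_l with beta; auto. unfold Rdiv. rewrite <- Rmult_assoc, (Rmult_comm beta M), Rmult_assoc, Rinv_r; lra. }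
  assert (Hv2 : forall r, (r < Rk)%nat -> 0 < norm2 n2 (V r) /\ norm1 n2 (V r) <= (gamma / beta) * norm2 n2 (V r)).
  { intros r Hr. specialize (Hvlow r Hr). fold F E sd M in Hvlow.
    assert (0 < M / gamma) by (apply Rdiv_lt_0_compat; auto). split; [lra|].
    apply Rle_trans with (M / beta); auto.
    replace (M / beta) with (gamma / beta * (M / gamma)) by (field; lra).
    apply Rmult_le_compat_l; [left; apply Rdiv_lt_0_compat; auto| lra]. }
  set (sX := fun r => norm2 n1 (U r) * norm2 n2 (V r)).
  set (UX := fun r => nz n1 (U r)). set (VX := fun r => nz n2 (V r)).
  assert (Hgb : 0 <= gamma / beta) by (left; apply Rdiv_lt_0_compat; auto).
  assert (HgoodX : forall s', 1 <= s' -> (gamma / beta) ^ 2 <= s' -> forall r, (r < Rk)%nat -> good n1 n2 (INR n1) s' (UX r) (VX r)).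
  { intros s' Hs' Hs'' r Hr. destruct (inK_U n1 (U r) Hn1). destruct (inK_V n2 ((gamma / beta) ^ 2) s' (V r)); auto.
    rewrite sqrt_pow2; auto. apply Hv2; auto. unfold good, UX, VX; auto. }
  assert (HgoodX2 : forall r, (r < Rk)%nat -> inK n2 ((gamma / beta) ^ 2) (VX r) /\ norm2 n2 (VX r) = 1).
  { intros r Hr. split; [|apply nz_prop; auto]. apply nz_inK; auto.
    rewrite sqrt_pow2; auto. apply Hv2; auto. intros. destruct (Hv2 r Hr); lra. }
  assert (HsX0 : 0 <= fsum Rk (fun r => sX r ^ 2)) by (apply fsum_nonneg; intros; apply pow2_ge_0).
  assert (HsX : fsum Rk (fun r => sX r ^ 2) <= (c * Gamma) ^ 2).
  { rewrite <- (pow2_sqrt (fsum Rk (fun r => sX r ^ 2))) by auto. apply pow_incr. split; [apply sqrt_pos|]. auto. }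
  assert (HmatX : mat_eq n1 n2 X (fun i j => fsum Rk (fun r => sX r * UX r i * VX r j))).
  { intros i j Hi Hj. unfold X, outer_sum. apply fsum_ext. intros r Hr. unfold sX, UX, VX. rewrite nz_outer; auto. }
  assert (Concl2 : inKR n1 n2 Rk (c * Gamma) (INR n1) ((gamma / beta) ^ 2) X).
  { exists sX, UX, VX. split; [|split; auto].
    intros r Hr. destruct (inK_U n1 (U r) Hn1). destruct (HgoodX2 r Hr). unfold UX; auto. }
  assert (Concl3 : forall r, (r < Rk)%nat -> inK n2 ((gamma / beta) ^ 2) (fun j => V r j / norm2 n2 (V r))).
  { intros r Hr. destruct (Hv2 r Hr). split.
    - rewrite norm2_div by auto. unfold Rdiv. rewrite Rinv_r; lra.
    - rewrite norm1_div by auto. rewrite sqrt_pow2 by auto.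
      apply Rmult_le_reg_r with (norm2 n2 (V r)); auto. unfold Rdiv. rewrite Rmult_assoc, Rinv_l; lra. }
  assert (HE2 : Rabs (norm2 m (Aop n1 n2 a (fun i j => Xhat i j - X i j)) ^ 2 - frob n1 n2 (fun i j => Xhat i j - X i j) ^ 2) <= delta).
  { apply HRIP. apply (inKR_concat _ _ _ _ _ _ sa Ua Va (fun r => - sX r) UX VX); auto.
    - apply HgoodX; auto. unfold S2; apply Rmax_r.
    - rewrite (fsum_ext Rk (fun r => (- sX r) ^ 2) (fun r => sX r ^ 2)) by (intros; ring).
      assert (Gamma ^ 2 + (c * Gamma) ^ 2 <= ((c + 1) * Gamma) ^ 2) by nra. lra.
    - intros i j Hi Hj. rewrite (HmatX i j Hi Hj). unfold Xhat, outer_sum.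
      rewrite (fsum_ext Rk (fun r => - sX r * UX r i * VX r j) (fun r => -1 * (sX r * UX r i * VX r j))) by (intros; ring).
      rewrite fsum_scal.
      rewrite (fsum_ext Rk (fun r => sa r * Ua r i * Va r j) (fun r => hU r i * hV r j)).
      ring. intros r Hr. unfold sa, Ua, Va. rewrite nz_outer; auto. }
  set (ar := fun r => norm2 n1 (hU r)). set (br := fun r => norm1 n2 (hV r)).
  set (tr := fun r => topt alpha beta (ar r) (br r)).
  set (U' := fun r i => if Rlt_dec 0 (ar r * br r) then tr r * hU r i else 0).
  set (V' := fun r j => if Rlt_dec 0 (ar r * br r) then hV r j / tr r else 0).
  set (Gp := Rpower (alpha * beta ^ 2) (1/3)). set (Sp := Rpower s (1/3)).
  assert (HGp : 0 < Gp) by apply exp_pos. assert (HSp : 0 < Sp) by apply exp_pos.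
  pose proof C21_pos as HC21.
  assert (Hcost : forall r, (r < Rk)%nat -> alpha * norm2 n1 (U' r) ^ 2 + beta * norm1 n2 (V' r)
        <= C21 * Gp * Sp * rpow (norm2 n1 (hU r) * norm2 n2 (hV r)) (2/3)).
  { intros r Hr. pose proof (norm2_nonneg n1 (hU r)). pose proof (norm1_nonneg n2 (hV r)).
    unfold U', V'. destruct (Rlt_dec 0 (ar r * br r)) as [Hp|Hp].
    - assert (0 < ar r) by (unfold ar, br in *; nra). assert (0 < br r) by (unfold ar, br in *; nra).
      assert (Ht : 0 < tr r) by apply topt_pos.
      rewrite norm2_scale, norm1_div, Rabs_right by lra.
      assert (Hbw : br r <= sqrt s * norm2 n2 (hV r)) by (apply HhV; auto).
      pose proof (per_term alpha beta s (ar r) (br r) (norm2 n2 (hV r)) Hal Hbe Hs1 H1 H2 Hbw).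
      assert (0 < norm2 n2 (hV r)).
      { pose proof (norm2_nonneg n2 (hV r)). destruct H4; auto. rewrite <- H4 in Hbw. lra. }
      rewrite rpow_pos_eq by (unfold ar in H1; nra).
      unfold tr, Gp, Sp. fold (ar r) (br r). 
      replace ((topt alpha beta (ar r) (br r) * ar r) ^ 2) with (topt alpha beta (ar r) (br r) ^ 2 * ar r ^ 2) by ring.
      lra.
    - assert (E1 : norm2 n1 (fun _ => 0) = 0).
      { unfold norm2. rewrite (fsum_ext n1 _ (fun _ => 0)) by (intros; ring). rewrite fsum_0. apply sqrt_0. }
      assert (E2 : norm1 n2 (fun _ => 0) = 0).
      { unfold norm1. rewrite (fsum_ext n2 _ (fun _ => 0)) by (intros; apply Rabs_R0). apply fsum_0. }
      rewrite E1, E2. pose proof (rpow_nonneg (norm2 n1 (hU r) * norm2 n2 (hV r)) (2/3)).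
      assert (0 <= C21 * Gp * Sp) by (repeat apply Rmult_le_pos; lra). nra. }
  assert (Hmat' : mat_eq n1 n2 (outer_sum Rk U' V') Xhat).
  { intros i j Hi Hj. unfold outer_sum, Xhat. apply fsum_ext. intros r Hr.
    unfold U', V'. destruct (Rlt_dec 0 (ar r * br r)) as [Hp|Hp].
    - assert (0 < tr r) by apply topt_pos. field. lra.
    - pose proof (norm2_nonneg n1 (hU r)). pose proof (norm1_nonneg n2 (hV r)).
      assert (ar r * br r = 0) by (unfold ar, br in *; nra).
      destruct (Rmult_integral _ _ H1) as [H2|H2].
      + rewrite (norm2_zero n1 (hU r) i H2 Hi). ring.
      + rewrite (norm1_zero n2 (hV r) j H2 Hj). ring. }
  set (K := C21 * Gp * Sp * (cU * rpow (INR Rk) (2/3) * rpow Nhat (2/3))).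
  assert (HJ' : J m n1 n2 Rk a y alpha beta U' V' <= E ^ 2 + K).
  { unfold J.
    assert (Ez : (fun k => y k - Aop n1 n2 a (outer_sum Rk U' V') k) = eta).
    { apply functional_extensionality; intros k. rewrite (Aop_ext n1 n2 a _ _ Hmat'). unfold y. ring. }
    rewrite Ez. fold E. rewrite <- !fsum_scal.
    assert (fsum Rk (fun i => alpha * norm2 n1 (U' i) ^ 2) + fsum Rk (fun i => beta * norm1 n2 (V' i)) <= K).
    { rewrite <- fsum_plus. apply Rle_trans with (fsum Rk (fun r => C21 * Gp * Sp * rpow (norm2 n1 (hU r) * norm2 n2 (hV r)) (2/3))).
      apply fsum_le; auto. rewrite fsum_scal. unfold K. apply Rmult_le_compat_l; auto.
      repeat apply Rmult_le_pos; lra. }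
    lra. }
  set (w := Aop n1 n2 a (fun i j => Xhat i j - X i j)).
  assert (Ew : (fun k => y k - Aop n1 n2 a (outer_sum Rk U V) k) = (fun k => w k + eta k)).
  { apply functional_extensionality; intros k. unfold w. rewrite Aop_sub. unfold y, X. ring. }
  assert (Hw : norm2 m w ^ 2 - 2 * norm2 m w * E <= K).
  { pose proof (norm2_rev m w eta). fold E in H. rewrite <- Ew in H.
    pose proof (proj2 (HJl U V)). pose proof (Hmin U' V'). lra. }
  set (D := sqrt (rpow s (1/3) * rpow (INR Rk) (2/3) * C21 * cU) * rpow (alpha * beta ^ 2) (1/6) * rpow Nhat (1/3)).
  assert (HD : 0 <= D).
  { unfold D. pose proof (sqrt_pos (rpow s (1/3) * rpow (INR Rk) (2/3) * C21 * cU)).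
    pose proof (rpow_nonneg (alpha * beta ^ 2) (1/6)). pose proof (rpow_nonneg Nhat (1/3)).
    repeat apply Rmult_le_pos; auto. }
  assert (HD2 : D ^ 2 = K).
  { unfold D. rewrite !Rpow_mult_distr, rpow_sq, rpow_sq, pow2_sqrt.
    - rewrite (rpow_pos_eq (alpha * beta ^ 2)) by (apply Rmult_lt_0_compat; [lra | apply pow_lt; lra]). rewrite (rpow_pos_eq s) by lra.
      unfold K, Gp, Sp. replace (2 * (1/6)) with (1/3) by field. replace (2 * (1/3)) with (2/3) by field. ring.
    - pose proof (rpow_nonneg s (1/3)). pose proof (rpow_nonneg (INR Rk) (2/3)).
      repeat apply Rmult_le_pos; lra. }
  assert (Hwb : norm2 m w <= 2 * E + D).
  { pose proof (norm2_nonneg m w). set (q := norm2 m w) in *.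
    assert ((q - E) ^ 2 <= (E + D) ^ 2) by nra.
    destruct (Rle_dec q (2 * E + D)); auto. nra. }
  assert (Hfr : frob n1 n2 (fun i j => Xhat i j - X i j) <= norm2 m w + sd).
  { pose proof (Rle_abs (- (norm2 m w ^ 2 - frob n1 n2 (fun i j => Xhat i j - X i j) ^ 2))).
    rewrite Rabs_Ropp in H. fold w in HE2. rewrite <- Hsd2 in HE2.
    pose proof (norm2_nonneg m w). pose proof (sqrt_pos (fsum n1 (fun i => fsum n2 (fun j => (Xhat i j - X i j) ^ 2)))).
    fold (frob n1 n2 (fun i j => Xhat i j - X i j)) in H1.
    set (f := frob n1 n2 (fun i j => Xhat i j - X i j)) in *. set (q := norm2 m w) in *.
    assert (0 <= q * sd) by nra.
    assert (f ^ 2 <= (q + sd) ^ 2) by nra.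
    destruct (Rle_dec f (q + sd)); auto. nra. }
  split; [|split; auto].
  fold D. unfold E, sd in *. lra.
Qed.
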